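(* Let $n$ be an odd positive integer, fix $\epsilon$ with $0<\epsilon<\frac12$, and let the parameter space be $\Theta^*=\{(\theta,\gamma_1,\dots,\gamma_n):\theta\in\{0,1\},\ \gamma_i\ge\frac12+\epsilon\ \forall i\}$ (with $\gamma_i\le 1$). Conditionally on $(\theta,\boldsymbol\gamma)\in\Theta^*$, let $Y_1,\dots,Y_n\in\{0,1\}$ be independent with $\mathbb{P}(Y_i=1\mid\theta=1,\boldsymbol\gamma)=\mathbb{P}(Y_i=0\mid\theta=0,\boldsymbol\gamma)=\gamma_i$, and let $U\sim\mathrm{Bernoulli}(1/2)$ be independent of $\vec Y$. Decision rules are functions $\delta:\{0,1\}^n\times\{0,1\}\to\{0,1\}$ with loss $L(\theta,a)=\mathbb{I}(\theta\ne a)$ and risk $R(\delta,\xi)=\mathbb{E}[L(\theta,\delta(\vec Y,U))\mid\xi]$ for $\xi=(\theta,\boldsymbol\gamma)$. Then the majority rule $\delta_M$, defined by $\delta_M(\vec y,u)=1$ if $\bar y>\frac12$ and $\delta_M(\vec y,u)=0$ otherwise (where $\bar y=\frac1n\sum_iy_i$), is minimax on $\Theta^*$: $\sup_{\xi\in\Theta^*}R(\delta_M,\xi)=\inf_\delta\sup_{\xi\in\Theta^*}R(\delta,\xi)$.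
   Context: Since $n$ is odd, $\bar y=\frac12$ cannot occur. *)

(* Defs.v *)
From HB Require Import structures.
From mathcomp Require Import all_boot all_order all_algebra.
From mathcomp Require Import all_classical all_reals.
Set Implicit Arguments. Unset Strict Implicit. Unset Printing Implicit Defensive.
Import Order.TTheory GRing.Theory Num.Theory.
Local Open Scope ring_scope.
Local Open Scope classical_set_scope.

(* Observation vectors y in {0,1}^n, encoded as finite functions 'I_n -> bool
   (true = 1). The parameter xi = (theta, gamma), theta : bool (true = 1). *)
Definition obs (n : nat) := {ffun 'I_n -> bool}.

Definition rule (n : nat) := obs n -> bool -> bool.

Definition lik (R : realType) (n : nat) (theta : bool) (gamma : 'I_n -> R)
  (y : obs n) : R :=
  \prod_(i < n) (if y i == theta then gamma i else 1 - gamma i).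

Definition loss (R : realType) (theta a : bool) : R := if theta != a then 1 else 0.

Definition risk (R : realType) (n : nat) (delta : rule n)
  (xi : bool * ('I_n -> R)) : R :=
  \sum_(y : obs n) \sum_(u : bool)
     lik xi.1 xi.2 y * (1 / 2) * loss R xi.1 (delta y u).

Definition Theta_star (R : realType) (n : nat) (eps : R) :
  set (bool * ('I_n -> R)) :=
  [set xi | forall i, 1 / 2 + eps <= xi.2 i /\ xi.2 i <= 1].

Definition majority (R : realType) (n : nat) : rule n :=
  fun y _ => (1 / 2 : R) < (\sum_(i < n) (y i : nat))%:R / n%:R.

Definition max_risk (R : realType) (n : nat) (eps : R) (delta : rule n) : R :=
  sup [set risk delta xi | xi in @Theta_star R n eps].

(* Main.v *)
Require Import Defs.
From HB Require Import structures.
From mathcomp Require Import all_boot all_order all_algebra.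
From mathcomp Require Import all_classical all_reals.
From mathcomp Require Import ring lra zify.
Import Order.TTheory GRing.Theory Num.Theory.
Local Open Scope ring_scope.
Local Open Scope classical_set_scope.

Section S.
Variables (R : realType) (n : nat).

Definition G (delta : rule n) (theta : bool) (y : obs n) : R :=
  \sum_(u : bool) (1/2) * loss R theta (delta y u).

Lemma riskE delta theta (gamma : 'I_n -> R) :
  risk delta (theta, gamma) = \sum_(y : obs n) lik theta gamma y * G delta theta y.
Proof.
rewrite /risk /G /=. apply: eq_bigr => y _. rewrite mulr_sumr.
by apply: eq_bigr => u _; rewrite -mulrA.
Qed.

Definition flip (i : 'I_n) (y : obs n) : obs n :=
  [ffun j => if j == i then ~~ y j else y j].

Lemma flipK i : involutive (flip i).
Proof.
move=> y; apply/ffunP => j; rewrite !ffunE.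
by case: eqP => // ->; rewrite negbK.
Qed.

Lemma lik_ext theta (g1 g2 : 'I_n -> R) y :
  (forall j, g1 j = g2 j) -> lik theta g1 y = lik theta g2 y.
Proof. by move=> h; apply: eq_bigr => j _; rewrite h. Qed.

Lemma mono_step (theta : bool) (g g' : 'I_n -> R) (i : 'I_n) (f : obs n -> R) :
  (forall j, 0 <= g j <= 1) ->
  (forall j, j != i -> g' j = g j) -> g i <= g' i ->
  (forall y : obs n, y i = theta -> f y <= f (flip i y)) ->
  \sum_(y : obs n) lik theta g' y * f y <= \sum_(y : obs n) lik theta g y * f y.
Proof.
move=> g01 gg' gle fm.
have split : forall F : obs n -> R, \sum_(y : obs n) F y =
    \sum_(y : obs n | y i == theta) (F y + F (flip i y)).
  move=> F; rewrite (bigID (fun y : obs n => y i == theta)) /= big_split /=.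
  congr (_ + _).
  rewrite (reindex_inj (can_inj (flipK i))) /=.
  apply: eq_bigl => y; rewrite ffunE eqxx.
  by case: (y i); case: (theta).
rewrite (split (fun y => lik theta g' y * f y)) (split (fun y => lik theta g y * f y)).
apply: ler_sum => y /eqP yi.
set P := \prod_(j < n | j != i) (if y j == theta then g j else 1 - g j).
have P0 : 0 <= P.
  apply: prodr_ge0 => j _; case: ifP => _; have := g01 j; lra.
have Hf := fm y yi.
have E1 : forall h : 'I_n -> R, (forall j, j != i -> h j = g j) ->
    lik theta h y = h i * P.
  move=> h hh; rewrite /lik (bigD1 i) //= yi eqxx; congr (_ * _).
  by apply: eq_bigr => j ji; rewrite hh.
have E2 : forall h : 'I_n -> R, (forall j, j != i -> h j = g j) ->
    lik theta h (flip i y) = (1 - h i) * P.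
  move=> h hh; rewrite /lik (bigD1 i) //= !ffunE eqxx yi.
  have -> : (~~ theta == theta) = false by case: (theta).
  congr (_ * _); apply: eq_bigr => j ji; rewrite ffunE (negbTE ji) hh //.
rewrite !E1 // !E2 //.
rewrite -subr_ge0.
have -> : g i * P * f y + (1 - g i) * P * f (flip i y) -
    (g' i * P * f y + (1 - g' i) * P * f (flip i y)) =
    (g' i - g i) * P * (f (flip i y) - f y) by ring.
by apply: mulr_ge0; [apply: mulr_ge0 => //; rewrite subr_ge0|rewrite subr_ge0].
Qed.

Lemma eqle (x y : R) : x = y -> x <= y. Proof. by move->. Qed.

Lemma mono_all (theta : bool) (g : 'I_n -> R) (p : R) (f : obs n -> R) :
  0 <= p -> (forall j, p <= g j <= 1) ->
  (forall i (y : obs n), y i = theta -> f y <= f (flip i y)) ->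
  \sum_(y : obs n) lik theta g y * f y <=
  \sum_(y : obs n) lik theta (fun _ => p) y * f y.
Proof.
move=> p0 hg hf.
pose gk k := fun j : 'I_n => if (j < k)%N then p else g j.
have gk01 : forall k j, 0 <= gk k j <= 1.
  move=> k j; rewrite /gk; case: ifP => _; have := hg j; lra.
have H : forall k, \sum_(y : obs n) lik theta g y * f y <=
                   \sum_(y : obs n) lik theta (gk k) y * f y.
  elim=> [|k IH].
    by apply: eqle; apply: eq_bigr => y _; rewrite (@lik_ext _ g (gk 0)) // => j; rewrite /gk ltn0.
  apply: (le_trans IH).
  case: (ltnP k n) => kn.
    apply: (@mono_step theta (gk k.+1) (gk k) (Ordinal kn)) => //.
    - move=> j jk; rewrite /gk.
      have : (nat_of_ord j != k) by apply: contra jk => /eqP e; apply/eqP/val_inj.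
      move=> /eqP jk'.
      by case: (ltnP j k) => h1; case: (ltnP j k.+1) => h2 //; exfalso; lia.
    - by rewrite /gk /= ltnn ltnSn; have := hg (Ordinal kn); lra.
    - by move=> y; apply: hf.
  apply: eqle; apply: eq_bigr => y _; congr (_ * _); apply: lik_ext => j.
  rewrite /gk; have jn := ltn_ord j.
  by rewrite (leq_trans jn kn) (leq_trans jn (leq_trans kn (leqnSn k))).
apply: (le_trans (H n)); apply: eqle; apply: eq_bigr => y _; congr (_ * _).
by apply: lik_ext => j; rewrite /gk ltn_ord.
Qed.

Definition cnt (y : obs n) : nat := (\sum_(i < n) (y i : nat))%N.

Lemma cntE (y : obs n) : cnt y = #|[pred j | y j]|.
Proof. by rewrite /cnt -sum1_card [RHS]big_mkcond /=; apply: eq_bigr => j _; rewrite inE; case: (y j). Qed.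

Lemma prod_if (a b : R) (y : obs n) :
  \prod_(j < n) (if y j then a else b) = a ^+ cnt y * b ^+ (n - cnt y).
Proof.
rewrite (bigID (fun j => y j)) /=.
rewrite (eq_bigr (fun _ => a)); last by move=> j ->.
rewrite [X in _ * X](eq_bigr (fun _ => b)); last by move=> j /negbTE ->.
rewrite !prodr_const cntE.
congr (_ * _); congr (_ ^+ _).
have e : #|(fun i => ~~ y i)| = #|[predC [pred j | y j]]| by apply: eq_card.
have h := cardC [pred j | y j]; rewrite card_ord in h.
rewrite e; move: h; set c := #|[pred j | y j]|; set d := #|[predC _]|; lia.
Qed.

Lemma majE (y : obs n) u : (0 < n)%N -> @majority R n y u = (n < 2 * cnt y)%N.
Proof.
move=> n0; rewrite /majority ltr_pdivlMr ?ltr0n // -(ltr_nat R) natrM.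
rewrite -/(cnt y).
by apply/idP/idP => h; lra.
Qed.

Lemma cnt_le (y y' : obs n) : (forall j, y j ==> y' j) -> (cnt y <= cnt y')%N.
Proof. by move=> h; apply: leq_sum => j _; move: (h j); case: (y j); case: (y' j). Qed.

Definition comp (y : obs n) : obs n := [ffun j => ~~ y j].

Lemma compK : involutive comp.
Proof. by move=> y; apply/ffunP => j; rewrite !ffunE negbK. Qed.

Lemma cnt_comp y : cnt (comp y) = (n - cnt y)%N.
Proof.
have : (cnt (comp y) + cnt y)%N = n.
  rewrite /cnt -big_split /=.
  rewrite (eq_bigr (fun _ => 1%N)); last by move=> j _; rewrite ffunE; case: (y j).
  by rewrite sum_nat_const card_ord muln1.
lia.
Qed.

Lemma loss_ge0 th a : 0 <= loss R th a.
Proof. by rewrite /loss; case: ifP. Qed.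

Lemma G_maj_mono (th : bool) i (y : obs n) : (0 < n)%N -> y i = th ->
  G (@majority R n) th y <= G (@majority R n) th (flip i y).
Proof.
move=> n0 yi; apply: ler_sum => u _; apply: ler_wpM2l; first lra.
rewrite /loss !majE //.
case: th yi => yi.
  have hc : (cnt (flip i y) <= cnt y)%N.
    by apply: cnt_le => j; rewrite ffunE; case: eqP => [->|]; rewrite ?yi ?implybb.
  case: (ltnP n (2 * cnt y)) => h1; case: (ltnP n (2 * cnt (flip i y))) => h2 //=;
    rewrite ?lexx ?ler01 //; lia.
have hc : (cnt y <= cnt (flip i y))%N.
  by apply: cnt_le => j; rewrite ffunE; case: eqP => [->|]; rewrite ?yi ?implybb.
case: (ltnP n (2 * cnt y)) => h1; case: (ltnP n (2 * cnt (flip i y))) => h2 //=;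
  rewrite ?lexx ?ler01 //; lia.
Qed.

Lemma cnt_leq y : (cnt y <= n)%N.
Proof.
rewrite /cnt -[X in (_ <= X)%N]card_ord -sum1_card.
by apply: leq_sum => j _; case: (y j).
Qed.

Lemma sym_risk (g : 'I_n -> R) : odd n ->
  risk (@majority R n) (true, g) = risk (@majority R n) (false, g).
Proof.
move=> hodd; have n0 : (0 < n)%N by case: n hodd.
rewrite !riskE (reindex_inj (can_inj compK)) /=.
apply: eq_bigr => y _; congr (_ * _).
  by apply: eq_bigr => j _; rewrite ffunE; case: (y j).
rewrite /G; apply: eq_bigr => u _; rewrite /loss !majE // cnt_comp.
have := odd_double_half n; rewrite hodd -muln2.
have := cnt_leq y.
set s := cnt y; set k := n./2 => hs hn.
by case: (ltnP n (2 * (n - s))) => h1; case: (ltnP n (2 * s)) => h2 //=; lia.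
Qed.

Lemma key_pow (p q : R) a b : (a <= b)%N -> 0 <= q -> q <= p ->
  p ^+ a * q ^+ b <= p ^+ b * q ^+ a.
Proof.
move=> hab q0 qp; rewrite -(subnKC hab) !exprD.
set d := (b - a)%N.
have p0 : 0 <= p by apply: le_trans qp.
have hd : q ^+ d <= p ^+ d by rewrite lerXn2r ?nnegrE.
have X0 : 0 <= p ^+ a * q ^+ a by rewrite mulr_ge0 ?exprn_ge0.
have -> : p ^+ a * (q ^+ a * q ^+ d) = (p ^+ a * q ^+ a) * q ^+ d by ring.
have -> : p ^+ a * p ^+ d * q ^+ a = (p ^+ a * q ^+ a) * p ^+ d by ring.
by apply: ler_wpM2l.
Qed.

Lemma bayes (p : R) (delta : rule n) : odd n -> 1/2 <= p <= 1 ->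
  risk (@majority R n) (false, fun _ => p) + risk (@majority R n) (true, fun _ => p) <=
  risk delta (false, fun _ => p) + risk delta (true, fun _ => p).
Proof.
move=> hodd hp; have n0 : (0 < n)%N by case: n hodd.
rewrite /risk -!big_split /=; apply: ler_sum => y _.
rewrite -!big_split /=; apply: ler_sum => u _.
set s := cnt y.
have Lt : lik true (fun _ => p) y = p ^+ s * (1 - p) ^+ (n - s).
  by rewrite -prod_if; apply: eq_bigr => j _; rewrite eqb_id.
have Lf : lik false (fun _ => p) y = (1 - p) ^+ s * p ^+ (n - s).
  by rewrite -prod_if; apply: eq_bigr => j _; case: (y j).
rewrite Lt Lf majE //.
have q0 : 0 <= 1 - p by lra.
have qp : 1 - p <= p by lra.
have p0 : 0 <= p by lra.
have A0 : 0 <= p ^+ s * (1 - p) ^+ (n - s) by rewrite mulr_ge0 ?exprn_ge0.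
have B0 : 0 <= (1 - p) ^+ s * p ^+ (n - s) by rewrite mulr_ge0 ?exprn_ge0.
case: (ltnP n (2 * s)) => h.
  have : p ^+ (n - s) * (1 - p) ^+ s <= p ^+ s * (1 - p) ^+ (n - s).
    by apply: key_pow => //; lia.
  rewrite [p ^+ (n - s) * _]mulrC.
  by case: (delta y u); rewrite /loss /=; lra.
have : p ^+ s * (1 - p) ^+ (n - s) <= p ^+ (n - s) * (1 - p) ^+ s.
  by apply: key_pow => //; lia.
rewrite [p ^+ (n - s) * _]mulrC.
by case: (delta y u); rewrite /loss /=; lra.
Qed.

Lemma risk_bound (delta : rule n) (eps : R) xi : 0 < eps -> @Theta_star R n eps xi ->
  risk delta xi <= \sum_(y : obs n) \sum_(u : bool) 1.
Proof.
case: xi => th g e0 hg; rewrite /risk; apply: ler_sum => y _; apply: ler_sum => u _.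
have l01 : 0 <= lik th g y <= 1.
  have h : forall j, 0 <= (if y j == th then g j else 1 - g j) <= 1.
    by move=> j; have := hg j; case: ifP => _ /=; lra.
  apply/andP; split; first by apply: prodr_ge0 => j _; case/andP: (h j).
  by apply: prodr_ile1 => j _; apply: h.
have lo : loss R th (delta y u) <= 1 by rewrite /loss; case: ifP.
apply: mulr_ile1; rewrite ?loss_ge0 //.
  by apply: mulr_ge0; [case/andP: l01|lra].
by apply: mulr_ile1; case/andP: l01 => ? ?; rewrite ?ler_pdivrMr //; lra.
Qed.
End S.

Theorem theorem8 (R : realType) (n : nat) (eps : R) :
  odd n -> 0 < eps -> eps < 1 / 2 ->
  @max_risk R n eps (@majority R n) =
  inf [set @max_risk R n eps delta | delta in [set: rule n]].
Proof.
move=> hodd e0 e1; have n0 : (0 < n)%N by case: n hodd.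
pose p : R := 1/2 + eps.
pose cp := fun _ : 'I_n => p.
have hcp : forall b, @Theta_star R n eps (b, cp) by move=> b i /=; rewrite /cp /p; lra.
pose r := risk (@majority R n) (true, cp).
have hM : forall xi, @Theta_star R n eps xi -> risk (@majority R n) xi <= r.
  case=> th g hg; rewrite riskE.
  apply: (le_trans (@mono_all R n th g p _ _ _ _)).
  - by rewrite /p; lra.
  - by move=> j; have := hg j; rewrite /p /=; lra.
  - by move=> i y yi; apply: G_maj_mono.
  rewrite -riskE /r; case: (th); first by [].
  by rewrite -sym_risk.
have maxM : max_risk eps (@majority R n) = r.
  apply/le_anti/andP; split.
    apply: ge_sup; first by exists r, (true, cp).
    by move=> x [xi hxi <-]; apply: hM.
  have ub : has_ubound [set risk (@majority R n) xi | xi in @Theta_star R n eps].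
    by exists r => x [xi hxi <-]; apply: hM.
  by apply: (ub_le_sup ub); exists (true, cp).
have hd : forall delta : rule n, r <= max_risk eps delta.
  move=> delta.
  have ub : has_ubound [set risk delta xi | xi in @Theta_star R n eps].
    by exists (\sum_(y : obs n) \sum_(u : bool) (1 : R)) => x [xi hxi <-];
       apply: (@risk_bound R n delta eps xi e0).
  have h1 := ub_le_sup ub (ex_intro2 _ _ (false, cp) (hcp false) erefl).
  have h2 := ub_le_sup ub (ex_intro2 _ _ (true, cp) (hcp true) erefl).
  have hb := @bayes R n p delta hodd.
  have : 1/2 <= p <= 1 by rewrite /p; apply/andP; split; lra.
  move=> /hb; rewrite -sym_risk // -/cp -/r.
  move: h1 h2; rewrite /max_risk; lra.
rewrite maxM; apply/le_anti/andP; split.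
  apply: lb_le_inf; first by exists (max_risk eps (@majority R n)), (@majority R n).
  by move=> x [d _ <-]; apply: hd.
have lb : has_lbound [set @max_risk R n eps delta | delta in [set: rule n]].
  by exists r => x [d _ <-]; apply: hd.
by rewrite -maxM; apply: (ge_inf lb); exists (@majority R n).
Qed.
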